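(* Let $(X,d,\preccurlyeq)$ be a preordered $s$-regular $b$-metric space, let $x_0\in X$, and let $\mathcal{F}=\{f_\alpha\}_{\alpha\in\mathcal{I}}$ ($\mathcal I$ nonempty) be a concordantly isotone family of self mappings of $X$ with $f_\alpha(x_0)\preccurlyeq x_0$ for all $\alpha\in\mathcal{I}$. Suppose that for every chain $C\in\mathcal{C}_1(x_0,\mathcal{F},\preccurlyeq)$ there exists $w\in X$ which is a common lower bound of the chains $f_\alpha(C)$, $\alpha\in\mathcal{I}$, and there exist $z\in X$ and $\beta\in\mathcal{I}$ such that for all $\alpha\in\mathcal{I}$ and all $i\in\mathbb{N}$, $f_\alpha(w)\preccurlyeq w\preccurlyeq f_\beta^i(z)$, and $d(f_\alpha^i(w),f_\beta^i(z))\to 0$ as $i\to\infty$ for all $\alpha\in\mathcal I$. Then the set $\mathrm{ComFix}(\mathcal{F})\cap O_X(x_0)$ is nonempty and contains a minimal element.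
   Context: A $b$-metric space with coefficient $s\ge 1$ is a nonempty set $X$ with $d:X\times X\to[0,\infty)$ such that for all $x,y,z$: $d(x,y)=0$ iff $x=y$; $d(x,y)=d(y,x)$; $d(x,y)\le s[d(x,z)+d(z,y)]$. A preorder is a reflexive transitive relation $\preccurlyeq$; $x\succcurlyeq y$ means $y\preccurlyeq x$; $x\prec y$ means $x\preccurlyeq y$ and $x\ne y$. A preordered $s$-regular $b$-metric space $(X,d,\preccurlyeq)$ is a $b$-metric space with coefficient $s$ with a preorder such that $x\preccurlyeq y\preccurlyeq z$ implies $\max\{d(x,y),d(y,z)\}\le s^2d(x,z)$. A chain is a subset any two elements of which are comparable. $f^i$ is the $i$-th iterate. A family $\mathcal{F}=\{f_\alpha\}_{\alpha\in\mathcal I}$ of self maps is concordantly isotone if for all $x,y\in X$, $x\prec y$ implies $f_\alpha(x)\preccurlyeq f_\beta(y)$ for all $\alpha,\beta\in\mathcal{I}$. $O_X(x_0)=\{x:x\preccurlyeq x_0\}$. $\mathcal{C}_1(\mathcal F,\preccurlyeq)$ is the set of chains $C\subset\bigcup_{\alpha}f_\alpha(X)$ such that $f_\alpha(x)\preccurlyeq x$ for all $x\in C,\alpha\in\mathcal I$, and for all $x,y\in C$, $x\prec y$ implies $x\preccurlyeq f_\alpha(y)$ for all $\alpha$. $\mathcal{C}_1(x_0,\mathcal F,\preccurlyeq)=\{C\in\mathcal C_1(\mathcal F,\preccurlyeq): C\subset O_X(x_0)\cap\bigcup_\alpha f_\alpha(O_X(x_0))\}$. $\mathrm{ComFix}(\mathcal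 F)=\{x: f_\alpha(x)=x\ \forall\alpha\in\mathcal I\}$. A common lower bound of the sets $f_\alpha(C)$ is $w$ with $w\preccurlyeq f_\alpha(x)$ for all $x\in C$, $\alpha\in\mathcal I$. A minimal element of $A$ is $w\in A$ with no $u\in A$ such that $u\prec w$. *)

(* Defs.v *)
From Stdlib Require Import Reals.
Open Scope R_scope.

Section Defs.
Context {X : Type}.

Definition is_b_metric (s : R) (d : X -> X -> R) : Prop :=
  1 <= s /\
  (forall x y, 0 <= d x y) /\
  (forall x y, d x y = 0 <-> x = y) /\
  (forall x y, d x y = d y x) /\
  (forall x y z, d x y <= s * (d x z + d z y)).

Definition is_preorder (le : X -> X -> Prop) : Prop :=
  (forall x, le x x) /\ (forall x y z, le x y -> le y z -> le x z).

Definition strict (le : X -> X -> Prop) (x y : X) : Prop := le x y /\ x <> y.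

Definition preordered_s_regular_b_metric (s : R) (d : X -> X -> R)
  (le : X -> X -> Prop) : Prop :=
  is_b_metric s d /\ is_preorder le /\
  (forall x y z, le x y -> le y z -> Rmax (d x y) (d y z) <= s ^ 2 * d x z).

Definition is_chain (le : X -> X -> Prop) (C : X -> Prop) : Prop :=
  forall x y, C x -> C y -> le x y \/ le y x.

Definition concordantly_isotone {I : Type} (le : X -> X -> Prop)
  (f : I -> X -> X) : Prop :=
  forall x y, strict le x y -> forall a b, le (f a x) (f b y).

Definition lower_set (le : X -> X -> Prop) (x0 : X) : X -> Prop :=
  fun x => le x x0.

Definition C1 {I : Type} (le : X -> X -> Prop) (f : I -> X -> X)
  (C : X -> Prop) : Prop :=
  is_chain le C /\
  (forall x, C x -> exists a y, x = f a y) /\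
  (forall x, C x -> forall a, le (f a x) x) /\
  (forall x y, C x -> C y -> strict le x y -> forall a, le x (f a y)).

Definition C1_at {I : Type} (le : X -> X -> Prop) (f : I -> X -> X)
  (x0 : X) (C : X -> Prop) : Prop :=
  C1 le f C /\
  (forall x, C x -> lower_set le x0 x /\
     exists a y, lower_set le x0 y /\ x = f a y).

Definition ComFix {I : Type} (f : I -> X -> X) : X -> Prop :=
  fun x => forall a, f a x = x.

Definition common_lower_bound {I : Type} (le : X -> X -> Prop)
  (f : I -> X -> X) (C : X -> Prop) (w : X) : Prop :=
  forall x a, C x -> le w (f a x).

Definition minimal_in (le : X -> X -> Prop) (A : X -> Prop) (w : X) : Prop :=
  A w /\ ~ (exists u, A u /\ strict le u w).

End Defs.

(* Main.v *)
Require Import Defs.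
From Stdlib Require Import Reals Lra Lia Classical.
From mathcomp Require boolp classical_sets.
Open Scope R_scope.

Section Aux.
Context {X : Type} (s : R) (d : X -> X -> R) (le : X -> X -> Prop)
  (I : Type) (f : I -> X -> X).

Lemma antisym_reg : preordered_s_regular_b_metric s d le ->
  forall u v, le u v -> le v u -> u = v.
Proof.
  intros [[Hs [Hpos [Hzero [Hsym Htri]]]] [[Hrefl Htrans] Hreg]] u v H1 H2.
  pose proof (Hreg u v u H1 H2) as H.
  assert (Hd : d u u = 0) by (apply Hzero; reflexivity).
  rewrite Hd, Rmult_0_r in H.
  apply Hzero. pose proof (Rmax_l (d u v) (d v u)). pose proof (Hpos u v). lra.
Qed.

Lemma fixed_lemma : preordered_s_regular_b_metric s d le ->
  concordantly_isotone le f ->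
  forall w z b,
  (forall a (i : nat), (1 <= i)%nat ->
            le (f a w) w /\ le w (Nat.iter i (f b) z)) ->
  (forall a, Un_cv (fun i => d (Nat.iter i (f a) w) (Nat.iter i (f b) z)) 0) ->
  ComFix f w.
Proof.
  intros Hsp Hiso w z b H1 H2 a.
  destruct Hsp as [[Hs [Hpos [Hzero [Hsym Htri]]]] [[Hrefl Htrans] Hreg]].
  assert (Hfw : le (f a w) w) by (apply (H1 a 1%nat); lia).
  assert (Hdesc : forall k, le (Nat.iter (S k) (f a) w) (Nat.iter k (f a) w)).
  { induction k.
    - exact Hfw.
    - destruct (classic (Nat.iter (S k) (f a) w = Nat.iter k (f a) w)) as [E|E].
      + change (le (f a (Nat.iter (S k) (f a) w)) (f a (Nat.iter k (f a) w))).
        rewrite E. apply Hrefl.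
      + apply Hiso. split; assumption. }
  assert (Hle1 : forall k, le (Nat.iter (S k) (f a) w) (f a w)).
  { induction k. - apply Hrefl. - eapply Htrans. apply Hdesc. exact IHk. }
  apply Hzero.
  destruct (Rle_lt_dec (d (f a w) w) 0) as [Hle|Hlt].
  { pose proof (Hpos (f a w) w). lra. }
  exfalso.
  assert (Hs2 : 1 <= s ^ 2) by (simpl; nra).
  remember (d (f a w) w) as D eqn:HD.
  destruct (H2 a (D / (s^2 * s^2))) as [N HN].
  { apply Rdiv_lt_0_compat; nra. }
  specialize (HN (S N) ltac:(lia)).
  unfold R_dist in HN. rewrite Rminus_0_r in HN.
  set (u := Nat.iter (S N) (f a) w) in *.
  set (Z := Nat.iter (S N) (f b) z) in *.
  assert (HwZ : le w Z) by (apply (H1 a (S N)); lia).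
  pose proof (Hreg u w Z (Htrans _ _ _ (Hle1 N) Hfw) HwZ) as R1.
  pose proof (Hreg u (f a w) w (Hle1 N) Hfw) as R2.
  pose proof (Rmax_l (d u w) (d w Z)).
  pose proof (Rmax_r (d u (f a w)) (d (f a w) w)) as HmR.
  pose proof (Hpos u Z).
  rewrite Rabs_pos_eq in HN by auto.
  assert (Hk : d u Z * (s^2*s^2) < D).
  { apply (Rmult_lt_compat_r (s^2*s^2)) in HN; [|nra].
    unfold Rdiv in HN. rewrite Rmult_assoc, Rinv_l, Rmult_1_r in HN by nra. exact HN. }
  rewrite <- HD in R2, HmR.
  assert (D <= s^2 * d u w) by lra.
  assert (d u w <= s^2 * d u Z) by lra.
  nra.
Qed.

End Aux.

Theorem theorem3p1 (X : Type) (s : R) (d : X -> X -> R) (le : X -> X -> Prop)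
  (I : Type) (f : I -> X -> X) (x0 : X) :
  preordered_s_regular_b_metric s d le ->
  inhabited I ->
  concordantly_isotone le f ->
  (forall a, le (f a x0) x0) ->
  (forall C : X -> Prop, C1_at le f x0 C ->
     exists w : X, common_lower_bound le f C w /\
       exists (z : X) (b : I),
         (forall a (i : nat), (1 <= i)%nat ->
            le (f a w) w /\ le w (Nat.iter i (f b) z)) /\
         (forall a, Un_cv (fun i => d (Nat.iter i (f a) w) (Nat.iter i (f b) z)) 0)) ->
  (exists x, ComFix f x /\ lower_set le x0 x) /\
  exists w, minimal_in le (fun x => ComFix f x /\ lower_set le x0 x) w.
Proof.
  intros Hsp [c] Hiso Hx0 Hmain.
  pose proof Hsp as Hsp'.
  destruct Hsp' as [_ [[Hrefl Htrans] _]].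
  assert (Hex : exists x, ComFix f x /\ lower_set le x0 x).
  { destruct (Hmain (fun x => x = f c x0)) as [w [Hlb [z [b [H1 H2]]]]].
    - split; [split; [|split; [|split]]|].
      + intros x y -> ->. left. apply Hrefl.
      + intros x ->. eauto.
      + intros x -> a. destruct (classic (f c x0 = x0)) as [E|E].
        * rewrite E. apply Hx0.
        * apply Hiso. split; auto.
      + intros x y -> -> [_ E]. congruence.
      + intros x ->. split. apply Hx0. exists c, x0. split; [apply Hrefl|reflexivity].
    - exists w. split. eapply fixed_lemma; eauto.
      unfold lower_set. eapply Htrans. apply (Hlb (f c x0) c eq_refl).
      destruct (classic (f c x0 = x0)) as [E|E].
      + rewrite E. apply Hx0.
      + eapply Htrans. apply (Hiso _ _ (conj (Hx0 c) E) c c). apply Hx0. }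
  split; [exact Hex|].
  set (A := fun x => ComFix f x /\ lower_set le x0 x).
  pose (T := {x : X | A x}).
  pose (Rl := fun (p q : T) => boolp.asbool (le (proj1_sig q) (proj1_sig p))).
  destruct (@classical_sets.Zorn T Rl) as [t Ht].
  - intros p. apply boolp.asboolT. apply Hrefl.
  - intros p q r H1 H2. apply boolp.asboolT.
    apply boolp.asboolW in H1. apply boolp.asboolW in H2. eauto.
  - intros [p Hp] [q Hq] H1 H2. apply boolp.asboolW in H1. apply boolp.asboolW in H2.
    simpl in *. assert (p = q) by (eapply antisym_reg; eauto). subst q.
    f_equal. apply boolp.Prop_irrelevance.
  - intros Ch Htot.
    destruct (classic (exists p, Ch p)) as [[p0 Hp0]|Hne].
    2:{ destruct Hex as [x Hx]. exists (exist _ x Hx). intros s0 Hs0. exfalso. eauto. }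
    set (C := fun x => exists p : T, Ch p /\ proj1_sig p = x).
    destruct (Hmain C) as [w [Hlb [z [b [H1 H2]]]]].
    + split; [split; [|split; [|split]]|].
      * intros x y [p [Hp <-]] [q [Hq <-]].
        destruct (Htot p q Hp Hq) as [H|H]; apply boolp.asboolW in H; auto.
      * intros x [[p [Hf Hl]] [_ <-]]. exists c, p. simpl. symmetry. apply Hf.
      * intros x [[p [Hf Hl]] [_ <-]] a. simpl. rewrite Hf. apply Hrefl.
      * intros x y _ [[q [Hf Hl]] [_ <-]] [Hxy _] a. simpl. rewrite Hf. exact Hxy.
      * intros x [[p [Hf Hl]] [_ <-]]. simpl. split. exact Hl.
        exists c, p. split. exact Hl. symmetry. apply Hf.
    + assert (Hw : A w).
      { split. eapply fixed_lemma; eauto.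
        destruct p0 as [p [Hf Hl]].
        eapply Htrans; [|exact Hl].
        rewrite <- (Hf c). apply (Hlb p c). exists (exist _ p (conj Hf Hl)). auto. }
      exists (exist _ w Hw). intros [q [Hf Hl]] Hq. apply boolp.asboolT. simpl.
      rewrite <- (Hf c). apply (Hlb q c). exists (exist _ q (conj Hf Hl)). auto.
  - destruct t as [w Hw]. exists w. split. exact Hw.
    intros [u [Hu [Hle Hne]]].
    specialize (Ht (exist _ u Hu) (boolp.asboolT Hle)).
    apply Hne. apply (f_equal (@proj1_sig _ _) Ht).
Qed.
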